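(* Let $f\in\mathbb{Z}[X]$ be a polynomial which is not a square in $\mathbb{C}[X]$. Then there exists a finite set $P_f$ of prime numbers such that for every finite set $P$ of prime numbers there are infinitely many $x\in\mathbb{Z}$ with (a) $p\nmid f(x)$ for every $p\in P\setminus P_f$, and (b) $v_p(f(x))\equiv1\pmod 2$ for some prime $p\notin P$.
   Context: $v_p$ denotes the $p$-adic valuation on $\mathbb{Q}^\times$. *)

(* Defs.v *)
From mathcomp Require Import all_boot all_order all_algebra all_field.
Set Implicit Arguments. Unset Strict Implicit. Unset Printing Implicit Defensive.
Import Order.TTheory GRing.Theory Num.Theory.
Local Open Scope ring_scope.

(* p-adic valuation of a nonzero integer z (value irrelevant when z = 0). *)
Definition vp (p : nat) (z : int) : nat := logn p `|z|%N.

Definition is_square_C (f : {poly int}) : Prop :=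
  exists g : {poly algC}, map_poly (intr : int -> algC) f = g ^+ 2.

(* Main.v *)
Require Import Defs.
From mathcomp Require Import all_boot all_order all_algebra all_field.
From Stdlib Require Import Classical.
From mathcomp Require Import zify ring.
Set Implicit Arguments. Unset Strict Implicit. Unset Printing Implicit Defensive.
Import Order.TTheory GRing.Theory Num.Theory.
Local Open Scope ring_scope.

Lemma irr_factor (f : {poly rat}) : (1 < size f)%N ->
  exists h, irreducible_poly h /\ h %| f.
Proof.
move: {2}(size f) (leqnn (size f)) => n; elim: n f => [|n IH] f.
  by rewrite leqn0 => /eqP ->.
move=> Hs H1.
have [irr|nirr] := classic (irreducible_poly f).
  by exists f; split=> //; rewrite dvdpp.
have [q [sq [qf nqf]]] : exists q : {poly rat}, size q != 1%N /\ q %| f /\ ~~ (q %= f).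
  apply: NNPP => Hn; apply: nirr; split=> // q sq qf.
  by apply: NNPP => Hq; apply: Hn; exists q; split=> //; split=> //; apply/negP.
have f0 : f != 0 by rewrite -size_poly_gt0 (ltn_trans _ H1).
have q0 : q != 0 by apply: contraNneq f0 => q0; move: qf; rewrite q0 dvd0p.
have sqf : (size q < size f)%N.
  rewrite ltn_neqAle dvdp_leq // andbT; apply: contra nqf => /eqP e.
  by rewrite -dvdp_size_eqp // e.
have [h [hi hq]] : exists h, irreducible_poly h /\ h %| q.
  apply: IH; first by rewrite -ltnS (leq_trans sqf).
  by rewrite ltn_neqAle eq_sym sq size_poly_gt0.
by exists h; split=> //; apply: dvdp_trans hq qf.
Qed.

Lemma size_mul_lt (p q : {poly rat}) : q != 0 -> (1 < size p)%N ->
  (size q < size (p * q)%R)%N.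
Proof.
move=> q0 sp; have p0 : p != 0 by rewrite -size_poly_gt0 (ltn_trans _ sp).
have := size_poly_gt0 q; rewrite q0 => qp.
rewrite size_mul //; move: sp qp; case: (size p) => [|[|a]] // _; case: (size q) => [|b] // _; rewrite !addSn /= addnS ltnS; exact: leq_addl.
Qed.

Lemma mult_ex (h f : {poly rat}) : (1 < size h)%N -> f != 0 ->
  exists e k, f = h ^+ e * k /\ ~~ (h %| k).
Proof.
move=> sh; move: {2}(size f) (leqnn (size f)) => n; elim: n f => [|n IH] f.
  by rewrite leqn0 size_poly_eq0 => ->.
move=> Hs f0; have [hf|nhf] := boolP (h %| f); last by exists 0%N, f; rewrite expr0 mul1r.
have /dvdpP [k fk] := hf.
have k0 : k != 0 by apply: contraNneq f0 => k0; rewrite fk k0 mul0r.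
have h0 : h != 0 by rewrite -size_poly_gt0 (ltn_trans _ sh).
have sk : (size k <= n)%N.
  by rewrite -ltnS (leq_trans _ Hs) // fk mulrC size_mul_lt.
have [e [k' [kk nk]]] := IH k sk k0.
by exists e.+1, k'; split=> //; rewrite fk kk exprS -mulrA mulrC.
Qed.

Lemma irr_coprime (h k : {poly rat}) : irreducible_poly h -> ~~ (h %| k) ->
  coprimep h k.
Proof.
move=> hi nk; have gh := dvdp_gcdl h k.
case: (irredp_XsubCP hi gh) => [g1|gh']; first by rewrite -gcdp_eqp1.
by move: nk; rewrite -(eqp_dvdl _ gh') dvdp_gcdr.
Qed.

Lemma irr_sep (h : {poly rat}) : irreducible_poly h -> coprimep h h^`().
Proof.
move=> hi; apply: irr_coprime => //; have sh := hi.1.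
have h0 : h != 0 by rewrite -size_poly_gt0 (ltn_trans _ sh).
have d0 : h^`() != 0.
  have c0 : h^`()`_(size h).-2 != 0.
    rewrite coef_deriv mulrn_eq0 negb_or.
    have -> : (size h).-2.+1 = (size h).-1 by move: sh; case: (size h) => [|[|m]].
    rewrite -lead_coefE lead_coef_eq0 h0 andbT; move: sh; case: (size h) => [|[|m]] //.
  by apply: contraNneq c0 => ->; rewrite coef0.
apply/negP => /(dvdp_leq d0); rewrite leqNgt lt_size_deriv //.
Qed.

Lemma decomp (f : {poly rat}) : f != 0 ->
  (exists (h : {poly rat}) e k, [/\ odd e, (1 < size h)%N, coprimep h k, coprimep h h^`()
     & f = h ^+ e * k]) \/ (exists c g, f = c%:P * g ^+ 2).
Proof.
move: {2}(size f) (leqnn (size f)) => n; elim: n f => [|n IH] f.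
  by rewrite leqn0 size_poly_eq0 => ->.
move=> Hs f0; have [s1|s2] := leqP (size f) 1.
  by right; exists f`_0, 1; rewrite expr1n mulr1 -size1_polyC.
have [h [hi hf]] := irr_factor s2.
have sh := hi.1.
have [e [k [fe nk]]] := mult_ex sh f0.
have k0 : k != 0 by apply: contraNneq f0 => k0; rewrite fe k0 mulr0.
have h0 : h != 0 by rewrite -size_poly_gt0 (ltn_trans _ sh).
have e0 : (0 < e)%N.
  by case: e fe => // fe; case/negP: nk; rewrite -(mul1r k) -(expr0 h) -fe.
have [eo|ee] := boolP (odd e).
  by left; exists h, e, k; split=> //; [apply: irr_coprime|apply: irr_sep].
have ee2 : e = (e./2 * 2)%N by rewrite -{1}(odd_double_half e) (negPf ee) -muln2.
have sk : (size k <= n)%N.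
  rewrite -ltnS (leq_trans _ Hs) // fe; case: e e0 {ee ee2 fe} => // e _.
  have q0 : h ^+ e * k != 0 by rewrite mulf_neq0 // expf_neq0.
  rewrite exprS -mulrA; apply: (leq_ltn_trans _ (size_mul_lt q0 sh)).
  by apply: dvdp_leq => //; apply: dvdp_mull.
have nhk1 : forall h1, h1 %| k -> ~~ (h %| h1).
  by move=> h1 h1k; apply/negP => hh1; move/negP: nk; apply; apply: dvdp_trans hh1 h1k.
case: (IH k sk k0) => [[h1 [e1 [k1 [o1 s1 c1 c1' kk]]]]|[c [g kk]]].
  left; exists h1, e1, (h ^+ e * k1); split=> //.
    rewrite coprimepMr coprimep_expr ?c1 //= coprimep_sym irr_coprime //.
    apply: nhk1; rewrite kk; apply: dvdp_mulr; apply: dvdp_exp => //.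
    by case: e1 {kk} o1.
  by rewrite fe kk mulrCA.
right; exists c, (h ^+ e./2 * g).
move: ee2; set m := e./2 => ee2.
by rewrite fe kk ee2 exprM mulrCA exprMn.
Qed.

Notation pZ := (map_poly (intr : int -> rat)).

Lemma pZ_inj : injective pZ.
Proof. by apply: map_inj_poly; [apply: intr_inj | rewrite rmorph0]. Qed.

Lemma scale_int (u : {poly rat}) : exists (U : {poly int}) (a : int),
  a != 0 /\ pZ U = (a%:~R : rat)%:P * u.
Proof.
have [U [a a0 ->]] := rat_poly_scale u; exists U, a; split=> //.
by rewrite mul_polyC scalerA mulfV ?scale1r // intr_eq0.
Qed.

Lemma bezout_int (H K : {poly int}) : coprimep (pZ H) (pZ K) ->
  exists U V (R : int), R != 0 /\ U * H + V * K = R%:P.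
Proof.
move/Bezout_coprimepP => [[u v] /=]; rewrite -size_poly_eq1 => /eqP s1.
set s := _ + _ in s1.
have Es : s = (s`_0)%:P by apply: size1_polyC; rewrite s1.
have c0 : s`_0 != 0 by apply/eqP => e; move: s1; rewrite Es e size_poly0.
move: (s`_0) Es c0 => c Es c0.
have [U [a [a0 EU]]] := scale_int (c^-1%:P * u).
have [V [b [b0 EV]]] := scale_int (c^-1%:P * v).
exists (b%:P * U), (a%:P * V), (a * b); split; first by rewrite mulf_neq0.
apply: pZ_inj; rewrite !rmorphD !rmorphM /= !map_polyC /= EU EV.
have E2 : (a%:~R)%:P * (b%:~R)%:P * (c^-1)%:P * s = (a%:~R)%:P * (b%:~R)%:P :> {poly rat}.
  by rewrite Es -!mulrA -[(c^-1)%:P * c%:P]polyCM mulVf // mulr1.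
rewrite -[RHS]E2 /s /=; ring.
Qed.

Lemma int_data (f : {poly int}) : ~ is_square_C f ->
  exists (H K : {poly int}) (e : nat) (c : int),
  [/\ odd e, (1 < size H)%N, c != 0 & c%:P * f = H ^+ e * K] /\
   (exists U V (R : int), R != 0 /\ U * H + V * K = R%:P) /\
   (exists U V (R : int), R != 0 /\ U * H + V * H^`() = R%:P).
Proof.
move=> nsq.
have f0 : pZ f != 0.
  apply/negP => /eqP e; apply: nsq; exists 0.
  have -> : f = 0 by apply: pZ_inj; rewrite e rmorph0.
  by rewrite rmorph0 expr2 mulr0.
case: (decomp f0) => [[h [e [k [eo sh chk chh' fe]]]] | [c [g fe]]]; last first.
  exfalso; apply: nsq; exists ((sqrtC (ratr c))%:P * map_poly ratr g).
  have -> : map_poly (intr : int -> algC) f = map_poly ratr (pZ f).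
    by rewrite -map_poly_comp; apply: eq_map_poly => x /=; rewrite ratr_int.
  rewrite fe rmorphM rmorphXn /= map_polyC /= exprMn.
  by rewrite -[(sqrtC _)%:P ^+ 2]rmorphXn /= sqrtCK.
have [H [a [a0 EH]]] := scale_int h.
have [K [b [b0 EK]]] := scale_int k.
have a0' : (a%:~R : rat) != 0 by rewrite intr_eq0.
have b0' : (b%:~R : rat) != 0 by rewrite intr_eq0.
exists H, K, e, (a ^+ e * b); split; [split=> //|split].
- by rewrite -(size_map_inj_poly (@intr_inj rat) (rmorph0 _)) EH size_Cmul.
- by rewrite mulf_neq0 // expf_neq0.
- apply: pZ_inj; rewrite !rmorphM !rmorphXn /= map_polyC /= EH EK fe.
  by rewrite map_polyC /= exprMn -!mulrA; congr (_ * _); rewrite mulrCA.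
- apply: bezout_int; rewrite EH EK !mul_polyC coprimepZl // coprimepZr //.
- apply: bezout_int; rewrite -deriv_map EH derivE !mul_polyC coprimepZl // coprimepZr //.
Qed.
Lemma poly_cong (p : {poly int}) x y : (x - y %| p.[x] - p.[y])%Z.
Proof.
have /factor_theorem [q Eq] : root (p - p.[y]%:P) y by rewrite /root !hornerE subrr.
have := congr1 (horner^~ x) Eq; rewrite !hornerE => ->.
exact: dvdz_mull.
Qed.

Lemma poly_congm (p : {poly int}) m x y : (m %| x - y)%Z -> (m %| p.[x] - p.[y])%Z.
Proof. by move=> h; apply: dvdz_trans h (poly_cong _ _ _). Qed.

Lemma taylor2 (p : {poly int}) r q : exists s,
  p.[r + q] = p.[r] + q * p^`().[r] + q ^+ 2 * s.
Proof.
elim/poly_ind: p => [|p c [s IH]]; first by exists 0; rewrite deriv0 !horner0; ring.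
exists (p^`().[r] + s * (r + q)).
rewrite derivMXaddC !hornerMXaddC hornerD hornerMX IH; ring.
Qed.

Lemma schur (H : {poly int}) : (1 < size H)%N -> forall m : nat, (0 < m)%N ->
  exists (q : nat) (r : int), [/\ prime q, coprime q m & (q%:Z %| H.[r])%Z].
Proof.
move=> sH m m0.
have [a0|a0] := eqVneq H.[0] 0.
  have pm : prime (pdiv m.+1) by apply: pdiv_prime; rewrite ltnS.
  exists (pdiv m.+1), 0; split => //; last by rewrite a0 dvdz0.
  rewrite prime_coprime //; apply/negP => dm.
  have : (pdiv m.+1 %| 1)%N by rewrite -(dvdn_addr 1 dm) addn1 pdiv_dvd.
  rewrite dvdn1 => /eqP e.
  by move: pm; rewrite e.
move: a0; set a := H.[0] => a0.
have /factor_theorem [H0 EH] : root (H - a%:P) 0 by rewrite /root !hornerE subrr.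
have H00 : H0 != 0.
  apply: contraTneq sH => e; move: EH; rewrite e mul0r => /eqP; rewrite subr_eq0 => /eqP ->.
  by rewrite size_polyC; case: (a != 0).
pose M : int := (3 * m)%N%:Z.
have M0 : a * M != 0 by rewrite mulf_neq0 // /M; lia.
pose rs := [seq a * M * i%:Z | i <- iota 1 (size H0)].
have urs : uniq rs.
  rewrite map_inj_uniq ?iota_uniq // => i j /(mulfI M0) /eqP.
  by rewrite eqz_nat => /eqP.
have : ~~ all (root H0) rs.
  apply/negP => al; have := max_poly_roots H00 al urs.
  by rewrite size_map size_iota ltnn.
case/allPn => _ /mapP [i iin ->] nr.
have i1 : (0 < i)%N by move: iin; rewrite mem_iota; case/andP.
pose y := M * i%:Z.
pose w := y * H0.[a * y].
pose u := 1 + w.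
have EHu : H.[a * y] = a * u.
  have := congr1 (horner^~ (a * y)) EH.
  rewrite /= hornerD hornerN hornerC hornerM hornerXsubC subr0 => E.
  by rewrite -[H.[_]](subrK a) E /u /w; ring.
have w3 : (3 <= `|w|)%N.
  rewrite /w abszM; apply: leq_trans (leq_pmulr _ _); last first.
    by rewrite absz_gt0; move: nr; rewrite /root /y mulrA.
  rewrite /y /M abszM; lia.
have u2 : (1 < `|u|)%N by rewrite /u; lia.
have pq := pdiv_prime u2.
exists (pdiv `|u|), (a * y); split => //.
- rewrite prime_coprime //; apply/negP => qm.
  have qu : ((pdiv `|u|)%:Z %| u)%Z by rewrite dvdzE pdiv_dvd.
  have qw : ((pdiv `|u|)%:Z %| w)%Z.
    rewrite /w /y /M; apply: dvdz_mulr; apply: dvdz_mulr.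
    by rewrite dvdzE /= dvdn_mull.
  have : ((pdiv `|u|)%:Z %| u - w)%Z by rewrite rpredB.
  rewrite /u addrK dvdz1 /= => /eqP e; by move: pq; rewrite e.
- by rewrite EHu; apply: dvdz_mull; rewrite dvdzE pdiv_dvd.
Qed.

Lemma crt (Pr : nat -> int -> Prop) (L : seq nat) (m b : int) :
  uniq L -> all prime L -> (forall p, p \in L -> coprimez m p%:Z) ->
  (forall p, p \in L -> exists a, Pr p a) ->
  exists x, (m %| x - b)%Z /\
    forall p, p \in L -> exists a, Pr p a /\ (p%:Z %| x - a)%Z.
Proof.
elim: L m b => [|p L IH] m b /=.
  by move=> _ _ _ _; exists b; split=> //; rewrite subrr dvdz0.
case/andP => pL uL /andP [pp aL] cop ex.
have [a Pa] := ex p (mem_head _ _).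
have cmp : coprimez m p%:Z by apply: cop; rewrite mem_head.
pose b' := zchinese m p%:Z b a.
have [x [xm xL]] : exists x, (m * p%:Z %| x - b')%Z /\
    forall p', p' \in L -> exists a, Pr p' a /\ (p'%:Z %| x - a)%Z.
  apply: IH => //.
  - move=> p' p'L; rewrite coprimezMl cop ?inE ?p'L ?orbT //=.
    have pp' : prime p' by move/allP: aL; apply.
    rewrite coprimezE /= prime_coprime // dvdn_prime2 //.
    by apply: contraNneq pL => ->.
  - by move=> p' p'L; apply: ex; rewrite inE p'L orbT.
exists x; split.
  have -> : x - b = (x - b') + (b' - b) by ring.
  rewrite rpredD //; first by apply: dvdz_trans xm; apply: dvdz_mulr; apply: dvdzz.
  by rewrite -eqz_mod_dvd zchinese_modl.
move=> p'; rewrite inE => /orP [/eqP ->|p'L]; last exact: xL.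
exists a; split=> //.
have -> : x - a = (x - b') + (b' - a) by ring.
rewrite rpredD //; first by apply: dvdz_trans xm; apply: dvdz_mull; apply: dvdzz.
by rewrite -eqz_mod_dvd zchinese_modr.
Qed.

Lemma large (x d : int) (N : nat) : d != 0 ->
  exists y, (N <= `|y|)%N /\ (d %| y - x)%Z.
Proof.
move=> d0; exists (x + `|d|%:Z * (N%:Z + `|x|%:Z)); split.
  have d1 : (1 <= `|d|)%N by rewrite absz_gt0.
  set z := x + _.
  have xa : - (`|x|%:Z) <= x by apply: lerNnormlW; rewrite abszE.
  have zN : N%:Z <= z.
    rewrite /z; set t := N%:Z + _.
    have t0 : 0 <= t by rewrite /t; lia.
    have : t <= `|d|%:Z * t by rewrite ler_peMl // lez_nat.
    rewrite /t; lia.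
  rewrite -lez_nat abszE ger0_norm //; apply: le_trans zN; lia.
rewrite addrAC subrr add0r; apply: dvdz_mulr; by rewrite dvdzE.
Qed.

Lemma prod_primes_gt0 (P : seq nat) : all prime P -> (0 < \prod_(p <- P) p)%N.
Proof.
elim: P => [|p P IH] /=; first by rewrite big_nil.
by case/andP => pp aP; rewrite big_cons muln_gt0 prime_gt0 // IH.
Qed.

Lemma dvd_prod (P : seq nat) q : q \in P -> (q %| \prod_(p <- P) p)%N.
Proof. by move=> qP; rewrite (big_rem q) //= dvdn_mulr. Qed.

Lemma exists_nonroot (f : {poly int}) : f != 0 -> exists i : nat, f.[i%:Z] != 0.
Proof.
move=> f0; pose rs := [seq i%:Z | i <- iota 0 (size f)].
have urs : uniq rs by rewrite map_inj_uniq ?iota_uniq // => i j /eqP; rewrite eqz_nat => /eqP.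
have : ~~ all (root f) rs.
  by apply/negP => al; have := max_poly_roots f0 al urs; rewrite size_map size_iota ltnn.
by case/allPn => _ /mapP [i _ ->] nr; exists i.
Qed.

Theorem lemma5p2 (f : {poly int}) :
  ~ is_square_C f ->
  exists Pf : seq nat, all prime Pf /\
    forall P : seq nat, all prime P ->
      forall N : nat, exists x : int, (N <= `|x|)%N /\
        (forall p : nat, prime p -> p \in P -> p \notin Pf ->
           ~~ (p%:Z %| f.[x])%Z) /\
        (f.[x] != 0 /\ exists p : nat, [/\ prime p, p \notin P & odd (vp p f.[x])]).
Proof.
move=> nsq.
have [H [K [e [c [[eo sH c0 Ef] [[U1 [V1 [R1 [R10 EB1]]]] [U2 [V2 [R2 [R20 EB2]]]]]]]]]] :=
  int_data nsq.
have f0 : f != 0.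
  by apply/negP => /eqP f0; apply: nsq; exists 0; rewrite f0 !rmorph0 expr2 mulr0.
have [i0 fi0] := exists_nonroot f0.
pose B := (`|f.[i0%:Z]|).+1.
pose Pf := [seq p <- iota 0 B | prime p && all (fun i : nat => (p%:Z %| f.[i%:Z])%Z) (iota 0 B)].
have wit : forall p, prime p -> p \notin Pf -> exists a, ~~ (p%:Z %| f.[a])%Z.
  move=> p pp pPf; case: (ltnP p B) => pB.
    move: pPf; rewrite mem_filter pp andTb mem_iota add0n pB leq0n !andbT; case/allPn => i _ ni.
    by exists i%:Z.
  exists i0%:Z; rewrite dvdzE /=; apply/negP => /dvdn_leq.
  by rewrite absz_gt0 fi0 => /(_ isT) h; move: pB; rewrite /B leqNgt ltnS h.
exists Pf; split.
  by apply/allP => p; rewrite mem_filter => /andP [/andP []].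
move=> P PP N.
pose m := (3 * `|c| * `|R1| * `|R2| * \prod_(p <- P) p)%N.
have m0 : (0 < m)%N.
  by rewrite /m !muln_gt0 !absz_gt0 c0 R10 R20 prod_primes_gt0.
have [q [r [pq cqm qHr]]] := schur sH m0.
move: cqm; rewrite /m !coprimeMr => /andP [/andP [/andP [/andP [_ cqc] cqR1] cqR2] cqP].
have qP : q \notin P.
  apply/negP => qP; move: cqP; rewrite prime_coprime // dvd_prod //.
have ndv : forall z : int, coprime q `|z| -> ~~ (q%:Z %| z)%Z.
  by move=> z; rewrite prime_coprime // dvdzE.
pose qZ := q%:Z.
have qZ0 : qZ != 0 by move: (prime_gt0 pq); rewrite /qZ; case: (q).
have nqH' : ~~ (qZ %| H^`().[r])%Z.
  have E2 : (U2 * H + V2 * H^`()).[r] = R2 by rewrite EB2 hornerC.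
  apply/negP => qH'; move/negP: (ndv _ cqR2); apply.
  by rewrite -E2 hornerD !hornerM rpredD // dvdz_mull.
pose x0 := if (qZ ^+ 2 %| H.[r])%Z then r + qZ else r.
have [qHx0 nq2Hx0] : (qZ %| H.[x0])%Z /\ ~~ (qZ ^+ 2 %| H.[x0])%Z.
  rewrite /x0; case: ifP => [q2|nq2]; last by rewrite nq2.
  have [s Es] := taylor2 H r qZ.
  have q2H : (qZ %| H.[r])%Z by apply: dvdz_trans q2; rewrite expr2 dvdz_mulr.
  rewrite Es; split.
    by rewrite !rpredD // ?dvdz_mulr // expr2 -mulrA dvdz_mulr.
  apply/negP => q2'; move/negP: nqH'; apply.
  have : (qZ ^+ 2 %| qZ * H^`().[r])%Z.
    have -> : qZ * H^`().[r] = (H.[r] + qZ * H^`().[r] + qZ ^+ 2 * s) - H.[r] - qZ ^+ 2 * s by ring.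
    by rewrite !rpredB // dvdz_mulr.
  by rewrite expr2 dvdz_mul2l.
pose L := undup [seq p <- P | p \notin Pf].
have memL : forall p, p \in L = (p \in P) && (p \notin Pf).
  by move=> p; rewrite mem_undup mem_filter andbC.
have LP : all prime L.
  by apply/allP => p; rewrite memL => /andP [pP _]; move/allP: PP; apply.
have cL : forall p, p \in L -> coprimez (qZ ^+ 2) p%:Z.
  move=> p pL; rewrite coprimez_pexpl // coprimezE /= prime_coprime // dvdn_prime2 //.
    by apply: contraNneq qP => ->; move: pL; rewrite memL => /andP [].
  by move/allP: LP; apply.
have wL : forall p, p \in L -> exists a, ~~ (p%:Z %| f.[a])%Z.
  move=> p pL; apply: wit; first by move/allP: LP; apply.
  by move: pL; rewrite memL => /andP [].
have [x1 [x1q x1L]] := @crt (fun p a => ~~ (p%:Z %| f.[a])%Z) L (qZ ^+ 2) x0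
  (undup_uniq _) LP cL wL.
pose D := qZ ^+ 2 * (\prod_(p <- L) p)%N%:Z.
have D0 : D != 0.
  by rewrite /D mulf_neq0 ?expf_neq0 // eqz_nat -lt0n prod_primes_gt0.
have [x [Nx xD]] := large x1 N D0.
have xq : (qZ ^+ 2 %| x - x0)%Z.
  have -> : x - x0 = (x - x1) + (x1 - x0) by ring.
  by rewrite rpredD //; apply: dvdz_trans xD; apply: dvdz_mulr.
have xL : forall p, p \in L -> exists a, ~~ (p%:Z %| f.[a])%Z /\ (p%:Z %| x - a)%Z.
  move=> p pL; have [a [na pa]] := x1L p pL; exists a; split=> //.
  have -> : x - a = (x - x1) + (x1 - a) by ring.
  rewrite rpredD //; apply: dvdz_trans xD; apply: dvdz_mull.
  by rewrite dvdzE /= dvd_prod.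
exists x; split=> //; split.
  move=> p pp pP pPf; have pL : p \in L by rewrite memL pP.
  have [a [na pa]] := xL p pL; apply: contra na => pfx.
  have -> : f.[a] = f.[x] - (f.[x] - f.[a]) by ring.
  by rewrite rpredB // poly_congm.
have Hc := poly_congm H xq.
have qHx : (qZ %| H.[x])%Z.
  have -> : H.[x] = (H.[x] - H.[x0]) + H.[x0] by ring.
  by rewrite rpredD //; apply: dvdz_trans Hc; rewrite expr2 dvdz_mulr.
have nq2Hx : ~~ (qZ ^+ 2 %| H.[x])%Z.
  apply: contra nq2Hx0 => h2.
  have -> : H.[x0] = H.[x] - (H.[x] - H.[x0]) by ring.
  by rewrite rpredB.
have nqK : ~~ (qZ %| K.[x])%Z.
  have E1 : (U1 * H + V1 * K).[x] = R1 by rewrite EB1 hornerC.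
  apply/negP => qK; move/negP: (ndv _ cqR1); apply.
  by rewrite -E1 hornerD !hornerM rpredD // dvdz_mull.
have Hx0 : H.[x] != 0 by apply: contraNneq nq2Hx => ->; rewrite dvdz0.
have Kx0 : K.[x] != 0 by apply: contraNneq nqK => ->; rewrite dvdz0.
have Efx : c * f.[x] = H.[x] ^+ e * K.[x].
  by have := congr1 (horner^~ x) Ef; rewrite /= hornerM hornerC hornerM horner_exp.
have fx0 : f.[x] != 0.
  apply: contraTneq (mulf_neq0 (expf_neq0 e Hx0) Kx0) => fx0.
  by rewrite -Efx fx0 mulr0 eqxx.
split=> //; exists q; split=> //.
have lH : logn q `|H.[x]| = 1%N.
  have l1 : (1 <= logn q `|H.[x]|)%N.
    by rewrite -pfactor_dvdn ?absz_gt0 // expn1 -dvdzE.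
  have l2 : ~~ (2 <= logn q `|H.[x]|)%N.
    by rewrite -pfactor_dvdn ?absz_gt0 // -[(q ^ 2)%N]/(`|qZ ^+ 2|) ?abszX -?dvdzE.
  by move: l1 l2; case: (logn _ _) => [|[|n]].
have lK : logn q `|K.[x]| = 0%N.
  by apply: logn_coprime; rewrite prime_coprime // -dvdzE.
have := congr1 (fun z : int => logn q `|z|) Efx => /=.
have p1 : (0 < `|c|)%N by rewrite absz_gt0.
have p2 : (0 < `|f.[x]|)%N by rewrite absz_gt0.
have p3 : (0 < `|H.[x]| ^ e)%N by rewrite expn_gt0 absz_gt0 Hx0.
have p4 : (0 < `|K.[x]|)%N by rewrite absz_gt0.
rewrite !abszM abszX !lognM // lognX lH lK.
rewrite (logn_coprime cqc) add0n addn0 muln1 /vp => ->; done.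
Qed.
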